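(* For every $\alpha\in\mathbb{N}_0$ and $y\in C^{(2\alpha+4)}(0,\infty)$, $$L_{2\alpha+4,x}^{\alpha}y(x)=-\Big\{L_{2,x}^{2\alpha+1}-\frac{2\alpha+2}{x}-\alpha-1\Big\}L_{2\alpha+2,x}^{\alpha-1}y(x),\qquad x>0.$$
   Context: $D_x^i$ is the $i$-fold derivative. For integer $\alpha\ge-1$, $L_{2\alpha+4,x}^{\alpha}y(x)=(-1)^{\alpha+1}e^x x\,D_x^{\alpha+2}\{e^{-x}D_x^{\alpha+2}[x^{\alpha+1}y(x)]\}$; in particular for $\alpha=-1$ this gives $L_{2,x}^{-1}y=x[y''-y']$. For real $\gamma$, $L_{2,x}^{\gamma}=xD_x^2+(\gamma+1-x)D_x$ (consistent with the previous at $\gamma=-1$). *)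

(* Defs.v *)
From Stdlib Require Import Reals Lra ClassicalEpsilon.
Open Scope R_scope.

(* Total derivative operator: the derivative of f at x when it exists
   (chosen by epsilon; derivatives are unique), arbitrary otherwise. *)
Definition deriv (f : R -> R) (x : R) : R :=
  epsilon (inhabits 0) (fun l => derivable_pt_lim f x l).

Definition Dn (n : nat) (f : R -> R) : R -> R := Nat.iter n deriv f.

Definition Cn_pos (n : nat) (y : R -> R) : Prop :=
  (forall k : nat, (k < n)%nat -> forall x, 0 < x ->
      derivable_pt_lim (Dn k y) x (Dn (S k) y x)) /\
  (forall x, 0 < x -> continuity_pt (Dn n y) x).

(* L_{2a+4,x}^{a} y(x) = (-1)^(a+1) e^x x D^(a+2){ e^(-x) D^(a+2)[x^(a+1) y(x)] }
   for integer a >= -1, indexed here by m = a+1 : nat.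
   So Lhigh m = L_{2m+2,x}^{m-1}. *)
Definition Lhigh (m : nat) (y : R -> R) (x : R) : R :=
  (-1) ^ m * exp x * x *
  Dn (S m) (fun t => exp (- t) * Dn (S m) (fun s => s ^ m * y s) t) x.

Definition L2 (gamma : R) (g : R -> R) (x : R) : R :=
  x * Dn 2 g x + (gamma + 1 - x) * Dn 1 g x.

(* Main.v *)
Require Import Defs.
From Stdlib Require Import Reals Lra Lia ClassicalEpsilon.
Open Scope R_scope.

Definition eqp (f g : R -> R) := forall t, 0 < t -> f t = g t.
Definition D_ok (n:nat) (f:R->R) := forall k, (k < n)%nat -> forall x, 0 < x ->
  derivable_pt_lim (Dn k f) x (Dn (S k) f x).

Lemma deriv_unique f x l : derivable_pt_lim f x l -> deriv f x = l.
Proof.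
  intros H. unfold deriv.
  assert (E : exists l, derivable_pt_lim f x l) by (exists l; exact H).
  pose proof (epsilon_spec (inhabits 0) _ E) as H2.
  eapply uniqueness_limite; eauto.
Qed.

Lemma loc f g x l : eqp f g -> 0 < x -> derivable_pt_lim g x l -> derivable_pt_lim f x l.
Proof.
  intros Hfg Hx Hg eps Heps.
  destruct (Hg eps Heps) as [d Hd].
  assert (Hd' : 0 < Rmin d x) by (apply Rmin_pos; [apply cond_pos|exact Hx]).
  exists (mkposreal _ Hd'). intros h Hh0 Hh. simpl in Hh.
  pose proof (Rmin_l d x). pose proof (Rmin_r d x).
  assert (Hxh : 0 < x + h) by (unfold Rabs in Hh; destruct (Rcase_abs h); lra).
  rewrite (Hfg (x+h) Hxh), (Hfg x Hx).
  apply Hd; auto. lra.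
Qed.

Lemma dext f x l l' : derivable_pt_lim f x l -> l = l' -> derivable_pt_lim f x l'.
Proof. intros H ->; exact H. Qed.
Lemma dplus f g x l1 l2 : derivable_pt_lim f x l1 -> derivable_pt_lim g x l2 ->
  derivable_pt_lim (fun t => f t + g t) x (l1 + l2).
Proof. intros; apply (derivable_pt_lim_plus f g); auto. Qed.
Lemma dmult f g x l1 l2 : derivable_pt_lim f x l1 -> derivable_pt_lim g x l2 ->
  derivable_pt_lim (fun t => f t * g t) x (l1 * g x + f x * l2).
Proof. intros; apply (derivable_pt_lim_mult f g); auto. Qed.
Lemma dscal a f x l : derivable_pt_lim f x l -> derivable_pt_lim (fun t => a * f t) x (a * l).
Proof. intros; apply (derivable_pt_lim_scal f); auto. Qed.
Lemma did x : derivable_pt_lim (fun t => t) x 1.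
Proof. apply derivable_pt_lim_id. Qed.
Lemma dexpneg x : derivable_pt_lim (fun t => exp (- t)) x (- exp (- x)).
Proof.
  eapply dext.
  - apply (derivable_pt_lim_comp (fun t => - t) exp).
    + apply (derivable_pt_lim_opp (fun t => t)). apply did.
    + apply derivable_pt_lim_exp.
  - ring.
Qed.

Lemma Dn_S1 k f : Dn (S k) f = Dn k (Dn 1 f).
Proof. induction k as [|k IH]; [reflexivity|]. change (deriv (Dn (S k) f) = deriv (Dn k (Dn 1 f))). now rewrite IH. Qed.
Lemma Dn_add k j f : Dn k (Dn j f) = Dn (k + j) f.
Proof. induction k as [|k IH]; [reflexivity|]. change (deriv (Dn k (Dn j f)) = deriv (Dn (k+j) f)). now rewrite IH. Qed.

Lemma formula_ind (f : R -> R) (F : nat -> R -> R) n :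
  eqp f (F 0%nat) ->
  (forall k, (k < n)%nat -> forall x, 0 < x -> derivable_pt_lim (F k) x (F (S k) x)) ->
  (forall k, (k <= n)%nat -> eqp (Dn k f) (F k)) /\ D_ok n f.
Proof.
  intros H0 HF.
  assert (E : forall k, (k <= n)%nat -> eqp (Dn k f) (F k)).
  { induction k as [|k IH]; intros Hk t Ht.
    - apply H0; auto.
    - change (Dn (S k) f t) with (deriv (Dn k f) t).
      apply deriv_unique. apply loc with (F k); auto. apply IH; lia. }
  split; auto.
  intros k Hk x Hx. rewrite (E (S k) ltac:(lia) x Hx). apply loc with (F k); auto. apply E; lia.
Qed.

Lemma eqp_transfer f g n : eqp f g -> D_ok n g ->
  (forall k, (k<=n)%nat -> eqp (Dn k f) (Dn k g)) /\ D_ok n f.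
Proof. intros H Hg. apply (formula_ind f (fun k => Dn k g)); auto. Qed.

Lemma lin a b f g n : D_ok n f -> D_ok n g ->
  (forall k, (k<=n)%nat -> eqp (Dn k (fun t => a * f t + b * g t)) (fun t => a * Dn k f t + b * Dn k g t))
  /\ D_ok n (fun t => a * f t + b * g t).
Proof.
  intros Hf Hg. apply (formula_ind _ (fun k t => a * Dn k f t + b * Dn k g t)).
  - intros t Ht. reflexivity.
  - intros k Hk x Hx. apply dplus; apply dscal; auto.
Qed.

Lemma leibx u n : D_ok n u ->
  (forall k, (k<=n)%nat -> eqp (Dn k (fun t => t * u t)) (fun t => t * Dn k u t + INR k * Dn (pred k) u t))
  /\ D_ok n (fun t => t * u t).
Proof.
  intros Hu. apply (formula_ind _ (fun k t => t * Dn k u t + INR k * Dn (pred k) u t)).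
  - intros t Ht. simpl. ring.
  - intros k Hk x Hx. cbv beta. eapply dext.
    + apply dplus.
      * apply (dmult (fun t => t) (Dn k u)). apply did. apply Hu; auto.
      * apply dscal. apply Hu; auto. lia.
    + destruct k as [|k]; simpl pred; [simpl; ring|]. rewrite (S_INR (S k)). ring.
Qed.

Lemma D_ok_weak n m f : D_ok n f -> (m <= n)%nat -> D_ok m f.
Proof. intros H Hm k Hk. apply H. lia. Qed.

Lemma D_ok_shift n j f : D_ok (n + j) f -> D_ok n (Dn j f).
Proof.
  intros H k Hk x Hx. rewrite !Dn_add. replace (S k + j)%nat with (S (k + j)) by lia.
  apply (H (k+j)%nat); [lia|exact Hx]. Qed.

Lemma D_ok_S f h n : (forall x, 0 < x -> derivable_pt_lim f x (h x)) -> D_ok n h -> D_ok (S n) f.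
Proof.
  intros Hf Hh.
  assert (E1 : eqp (Dn 1 f) h) by (intros t Ht; apply deriv_unique, Hf, Ht).
  destruct (eqp_transfer _ _ n E1 Hh) as [_ H2].
  intros k Hk x Hx. destruct k as [|k].
  - change (derivable_pt_lim f x (deriv f x)). rewrite (deriv_unique _ _ _ (Hf x Hx)). apply Hf; auto.
  - rewrite (Dn_S1 k f), (Dn_S1 (S k) f). apply H2; auto; lia.
Qed.

Lemma expmul n : forall v, D_ok n v -> D_ok n (fun t => exp (-t) * v t).
Proof.
  induction n as [|n IH]; intros v Hv.
  - intros k Hk; lia.
  - apply (D_ok_S _ (fun t => exp (-t) * (1 * Dn 1 v t + (-1) * v t))).
    + intros x Hx. eapply dext.
      * apply (dmult (fun t => exp (-t)) v). apply dexpneg. apply (Hv 0%nat); auto; lia.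
      * ring.
    + apply IH. apply lin.
      * apply D_ok_shift. replace (n + 1)%nat with (S n) by lia. exact Hv.
      * apply D_ok_weak with (S n); auto.
Qed.

Lemma powy y n : D_ok n y -> forall j, D_ok n (fun s => s ^ j * y s).
Proof.
  intros Hy j. induction j as [|j IH].
  - apply (eqp_transfer _ y n); auto. intros t _. simpl. ring.
  - apply (eqp_transfer _ (fun t => t * (t ^ j * y t)) n).
    + intros t _. simpl. ring.
    + apply leibx; auto.
Qed.

Theorem theorem3p1 (alpha : nat) (y : R -> R)
  (hy : Cn_pos (2 * alpha + 4) y) (x : R) (hx : 0 < x) :
  Lhigh (S alpha) y x =
  - ( L2 (INR (2 * alpha + 1)) (Lhigh alpha y) x
      - INR (2 * alpha + 2) / x * Lhigh alpha y x
      - (INR alpha + 1) * Lhigh alpha y x ).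
Proof.
  set (m := alpha).
  assert (Hy : D_ok (2 * m + 4) y) by exact (proj1 hy).
  set (u := fun s => s ^ m * y s).
  assert (Hu : D_ok (2 * m + 4) u) by (apply powy; exact Hy).
  set (v := Dn (S m) u).
  assert (Hv : D_ok (m + 3) v).
  { apply D_ok_shift. replace (m + 3 + S m)%nat with (2 * m + 4)%nat by lia. exact Hu. }
  set (w := fun t => exp (- t) * v t).
  assert (Hw : D_ok (m + 3) w) by (apply expmul; exact Hv).
  set (c := (-1) ^ m).
  set (z0 := Dn (S m) w x). set (z1 := Dn (S (S m)) w x). set (z2 := Dn (S (S (S m))) w x).
  set (G := fun t => c * (exp t * t * Dn (S m) w t + exp t * Dn (S m) w t
                          + exp t * t * Dn (S (S m)) w t)).
  assert (HF1 : forall t, 0 < t -> derivable_pt_lim (Lhigh m y) t (G t)).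
  { intros t Ht. unfold Lhigh. eapply dext.
    - apply (dmult (fun t => (-1) ^ m * exp t * t) (Dn (S m) w)).
      + apply (dmult (fun t => (-1) ^ m * exp t) (fun t => t)).
        * apply dscal. apply derivable_pt_lim_exp.
        * apply did.
      + apply Hw; auto; lia.
    - unfold G, c. ring. }
  assert (D1 : Dn 1 (Lhigh m y) x = G x) by (apply deriv_unique, HF1, hx).
  assert (D2 : Dn 2 (Lhigh m y) x =
     c * (exp x * x * z0 + 2 * exp x * z0 + 2 * exp x * x * z1 + 2 * exp x * z1 + exp x * x * z2)).
  { change (deriv (Dn 1 (Lhigh m y)) x = c * (exp x * x * z0 + 2 * exp x * z0 + 2 * exp x * x * z1 + 2 * exp x * z1 + exp x * x * z2)). apply deriv_unique.
    apply loc with G; auto.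
    { intros t Ht. apply deriv_unique, HF1, Ht. }
    unfold G. eapply dext.
    - apply dscal. apply dplus; [apply dplus|].
      + apply (dmult (fun t => exp t * t) (Dn (S m) w)).
        * apply (dmult exp (fun t => t)). apply derivable_pt_lim_exp. apply did.
        * apply Hw; auto; lia.
      + apply (dmult exp (Dn (S m) w)). apply derivable_pt_lim_exp. apply Hw; auto; lia.
      + apply (dmult (fun t => exp t * t) (Dn (S (S m)) w)).
        * apply (dmult exp (fun t => t)). apply derivable_pt_lim_exp. apply did.
        * apply Hw; auto; lia.
    - unfold z0, z1, z2. ring. }
  assert (Hxu := leibx u _ Hu).
  destruct Hxu as [Exu Hxu].
  assert (Ep : eqp (fun s => s ^ S m * y s) (fun t => t * u t)).
  { intros t _. unfold u. simpl. ring. }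
  destruct (eqp_transfer _ _ _ Ep Hxu) as [Ep2 _].
  assert (Dw : forall t, 0 < t -> Dn 1 w t = - exp (- t) * v t + exp (- t) * Dn 1 v t).
  { intros t Ht. apply deriv_unique. apply (dmult (fun t => exp (-t)) v).
    apply dexpneg. apply (Hv 0%nat); auto; lia. }
  set (h := fun t => 1 * (1 * (t * Dn 1 w t) + 1 * (t * w t)) + INR (S (S m)) * w t).
  set (g2 := fun t => exp (- t) * Dn (S (S m)) (fun s => s ^ S m * y s) t).
  assert (Eg : eqp g2 h).
  { intros t Ht. unfold g2, h. rewrite (Ep2 (S (S m)) ltac:(lia) t Ht).
    rewrite (Exu (S (S m)) ltac:(lia) t Ht). rewrite (Dw t Ht).
    unfold w. change (Dn (S (S m)) u t) with (Dn 1 v t). simpl pred. fold v. ring. }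
  assert (Hw1 : D_ok (m + 2) (Dn 1 w)).
  { apply D_ok_shift. replace (m + 2 + 1)%nat with (m + 3)%nat by lia. exact Hw. }
  assert (Hw2 : D_ok (m + 2) w) by (apply D_ok_weak with (m + 3)%nat; auto; lia).
  destruct (leibx _ _ Hw1) as [Ea Ha].
  destruct (leibx _ _ Hw2) as [Eb Hb].
  destruct (lin 1 1 _ _ _ Ha Hb) as [Eab Hab].
  destruct (lin 1 (INR (S (S m))) _ _ _ Hab Hw2) as [Eh Hh].
  destruct (eqp_transfer _ _ _ Eg Hh) as [Eg2 _].
  assert (LHS : Lhigh (S m) y x = - c * exp x * x *
     (x * z2 + INR (S (S m)) * z1 + x * z1 + INR (S (S m)) * z0 + INR (S (S m)) * z1)).
  { unfold Lhigh. fold g2.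
    rewrite (Eg2 (S (S m)) ltac:(lia) x hx).
    unfold h. rewrite (Eh (S (S m)) ltac:(lia) x hx).
    rewrite (Eab (S (S m)) ltac:(lia) x hx).
    rewrite (Ea (S (S m)) ltac:(lia) x hx).
    rewrite (Eb (S (S m)) ltac:(lia) x hx).
    simpl pred. rewrite <- (Dn_S1 (S (S m)) w), <- (Dn_S1 (S m) w). unfold z0, z1, z2, c. simpl pow. ring. }
  rewrite LHS. unfold L2. rewrite D1, D2.
  assert (FF : Lhigh m y x = c * exp x * x * z0) by reflexivity.
  rewrite FF. unfold G. fold z0 z1.
  rewrite !plus_INR, !mult_INR, !S_INR. simpl INR.
  field. lra.
Qed.
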